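(* Let $E$ be a finite set and $w\geq 1$ an integer. The map $\mathcal{D}:[0,\infty]^E\to[0,|E|]$ defined by $$\mathcal{D}(\mathbf{Y})=\sum_{e\in E}\frac{Y_e\mathcal{R}_e(\mathbf{Y})}{1+Y_e\mathcal{R}_e(\mathbf{Y})}\mathbf{1}(Y_e<\infty)+\min\Big(w,\sum_{e\in E}\mathbf{1}(Y_e=\infty)\Big)$$ is continuous (and coincides with $\sum_{e}\frac{Y_e\mathcal{R}_e(\mathbf{Y})}{1+Y_e\mathcal{R}_e(\mathbf{Y})}$ on $[0,\infty)^E$).
   Context: For $S\subseteq E$, $\mathbf{Y}^S=\prod_{f\in S}Y_f$, $\mathbf{Y}^\emptyset=1$. For $e\in E$, $\mathcal{R}_e$ is the map $[0,\infty]^{E\setminus\{e\}}\to[0,1]$ (applied to the coordinates of $\mathbf{Y}$ other than $e$) given on finite vectors by $\mathcal{R}_e(\mathbf{Y})=\frac{\sum_{S\subseteq E\setminus\{e\},|S|\leq w-1}\mathbf{Y}^S}{\sum_{S\subseteq E\setminus\{e\},|S|\leq w}\mathbf{Y}^S}$ and in general as follows: with $E'_e(\mathbf{Y})=\{f\neq e:Y_f=\infty\}$, if $|E'_e(\mathbf{Y})|<w$ then $\mathcal{R}_e(\mathbf{Y})=\frac{\sum_{S\subseteq E\setminus(E'_e\cup\{e\}),|S|\leq w-|E'_e|-1}\mathbf{Y}^S}{\sum_{S\subseteq E\setminus(E'_e\cup\{e\}),|S|\leq w-|E'_e|}\mathbf{Y}^S}$, and if $|E'_e(\mathbf{Y})|\geq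 w$ then $\mathcal{R}_e(\mathbf{Y})=0$. *)

(* Defs.v *)
From mathcomp Require Import all_boot.
From Stdlib Require Import Reals.

Set Implicit Arguments.
Unset Strict Implicit.
Unset Printing Implicit Defensive.

(* Extended nonnegative half-line [0, oo]: finite values or oo. *)
Inductive xR : Type := Fin (r : R) | Inf.

Definition isInf (a : xR) : bool := if a is Inf then true else false.
Definition isFin (a : xR) : bool := ~~ isInf a.
(* real part of a finite value (0 for oo; only used on finite coordinates) *)
Definition fpart (a : xR) : R := if a is Fin r then r else 0%R.

Definition nonneg_x (a : xR) : Prop :=
  match a with Fin r => (0 <= r)%R | Inf => True end.

Section Defs.
Variable E : finType.
Variable w : nat.

Definition monom (Y : E -> xR) (S : {set E}) : R :=
  \big[Rmult/1%R]_(f in S) fpart (Y f).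

Definition Eprime (e : E) (Y : E -> xR) : {set E} :=
  [set f | (f != e) && isInf (Y f)].

Definition subsum (Y : E -> xR) (A : {set E}) (k : nat) : R :=
  \big[Rplus/0%R]_(S : {set E} | (S \subset A) && (#|S| <= k)%N) monom Y S.

Definition Rmap (e : E) (Y : E -> xR) : R :=
  let E' := Eprime e Y in
  if (#|E'| < w)%N then
    Rdiv (subsum Y (~: (E' :|: [set e])) (w - #|E'| - 1))
         (subsum Y (~: (E' :|: [set e])) (w - #|E'|))
  else 0%R.

Definition Rmap_fin (e : E) (Y : E -> xR) : R :=
  Rdiv (subsum Y (~: [set e]) (w - 1)) (subsum Y (~: [set e]) w).

Definition term (y r : R) : R := Rdiv (y * r)%R (1 + y * r)%R.

Definition Dmap (Y : E -> xR) : R :=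
  (\big[Rplus/0%R]_(e : E)
     (if isFin (Y e) then term (fpart (Y e)) (Rmap e Y) else 0%R)
   + INR (minn w #|[set e | isInf (Y e)]|))%R.

End Defs.

(* Neighbourhood base of the order topology on [0, oo]:
   around a finite point x: finite points y with |y - x| < d;
   around oo: oo itself and finite points y > M. *)
Definition near_xR (d M : R) (a b : xR) : Prop :=
  match a, b with
  | Fin x, Fin y => (Rabs (y - x) < d)%R
  | Fin _, Inf => False
  | Inf, Inf => True
  | Inf, Fin y => (M < y)%R
  end.

Definition continuous_on_xR (E : finType) (f : (E -> xR) -> R) : Prop :=
  forall Y : E -> xR, (forall e, nonneg_x (Y e)) ->
  forall eps : R, (0 < eps)%R ->
  exists d : R, (0 < d)%R /\ exists M : R,
    forall Z : E -> xR, (forall e, nonneg_x (Z e)) ->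
      (forall e, near_xR d M (Y e) (Z e)) ->
      (Rabs (f Z - f Y) < eps)%R.

(* Main.v *)
From HB Require Import structures.
Require Import Defs.
From mathcomp Require Import all_boot zify.
From Stdlib Require Import Reals Lra.

Set Implicit Arguments.
Unset Strict Implicit.
Unset Printing Implicit Defensive.

Lemma RplusA' : associative Rplus. Proof. move=> x y z; ring. Qed.
Lemma RmultA' : associative Rmult. Proof. move=> x y z; ring. Qed.
HB.instance Definition _ := Monoid.isComLaw.Build R 0%R Rplus
  RplusA' Rplus_comm Rplus_0_l.
HB.instance Definition _ := Monoid.isComLaw.Build R 1%R Rmult
  RmultA' Rmult_comm Rmult_1_l.
HB.instance Definition _ := Monoid.isMulLaw.Build R 0%R Rmult Rmult_0_l Rmult_0_r.
HB.instance Definition _ := Monoid.isAddLaw.Build R Rmult Rplus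
  Rmult_plus_distr_r Rmult_plus_distr_l.

Delimit Scope nat_scope with N.
Local Open Scope R_scope.

Lemma sumR_ge0 (I : Type) (r : seq I) (P : pred I) (F : I -> R) :
  (forall i, P i -> 0 <= F i) -> 0 <= \big[Rplus/0]_(i <- r | P i) F i.
Proof. move=> H; apply: big_ind => //; [lra | move=> x y; lra]. Qed.

Lemma prodR_ge0 (I : Type) (r : seq I) (P : pred I) (F : I -> R) :
  (forall i, P i -> 0 <= F i) -> 0 <= \big[Rmult/1]_(i <- r | P i) F i.
Proof. move=> H; apply: big_ind => //; [lra | move=> x y; nra]. Qed.

Lemma sumR_le (I : Type) (r : seq I) (P : pred I) (F G : I -> R) :
  (forall i, P i -> F i <= G i) ->
  \big[Rplus/0]_(i <- r | P i) F i <= \big[Rplus/0]_(i <- r | P i) G i.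
Proof.
move=> H; apply: (big_ind2 (fun a b => a <= b)) => //; [lra | move=> *; lra].
Qed.

Lemma sumR_abs (I : Type) (r : seq I) (P : pred I) (F : I -> R) :
  Rabs (\big[Rplus/0]_(i <- r | P i) F i) <= \big[Rplus/0]_(i <- r | P i) Rabs (F i).
Proof.
apply: (big_ind2 (fun a b => Rabs a <= b)).
- rewrite Rabs_R0; lra.
- move=> x1 x2 y1 y2 h1 h2; apply: Rle_trans (Rabs_triang _ _) _; lra.
- move=> i _; lra.
Qed.

Lemma sumRN (I : Type) (r : seq I) (P : pred I) (F : I -> R) :
  \big[Rplus/0]_(i <- r | P i) (- F i) = - \big[Rplus/0]_(i <- r | P i) F i.
Proof.
apply: (big_ind2 (fun a b => a = - b)) => //.
- lra.
- move=> x1 x2 y1 y2 -> ->; lra.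
Qed.

Lemma sumRB (I : Type) (r : seq I) (P : pred I) (F G : I -> R) :
  \big[Rplus/0]_(i <- r | P i) (F i - G i) =
  \big[Rplus/0]_(i <- r | P i) F i - \big[Rplus/0]_(i <- r | P i) G i.
Proof. by rewrite /Rminus big_split /= sumRN. Qed.

Lemma iter_plus n c : iter n (Rplus c) 0 = INR n * c.
Proof. elim: n => [|n IH]; first (simpl; lra). rewrite iterS IH S_INR; lra. Qed.

Lemma sumR_const_in (I : finType) (A : {pred I}) c :
  \big[Rplus/0]_(i in A) c = INR #|A| * c.
Proof. by rewrite big_const iter_plus. Qed.

Lemma sumR_const (I : finType) c :
  \big[Rplus/0]_(i : I) c = INR #|I| * c.
Proof.
rewrite -(sumR_const_in (I:=I) predT c).
by apply: eq_bigl => i.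
Qed.

Lemma sum_le_card (I : finType) (P : pred I) (F : I -> R) c :
  0 <= c -> (forall i, P i -> F i <= c) ->
  \big[Rplus/0]_(i | P i) F i <= INR #|I| * c.
Proof.
move=> c0 H; rewrite big_mkcond /= -sumR_const; apply: sumR_le => i _.
by case: ifP => [/H|_] //.
Qed.

Lemma single_le_sum (I : finType) (P : pred I) (F : I -> R) j :
  P j -> (forall i, P i -> 0 <= F i) ->
  F j <= \big[Rplus/0]_(i | P i) F i.
Proof.
move=> Pj H; rewrite (bigD1 j) //=.
have : 0 <= \big[Rplus/0]_(i | P i && (i != j)) F i.
  by apply: sumR_ge0 => i /andP [/H].
lra.
Qed.
Section Sets.
Variable E : finType.
Implicit Types (Y Z : E -> xR) (A F S : {set E}).

Definition nonnegY Y := forall e, nonneg_x (Y e).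

Lemma fpart_ge0 a : nonneg_x a -> 0 <= fpart a.
Proof. by case: a => [r|] //= _; lra. Qed.

Lemma monom_ge0 Y S : nonnegY Y -> 0 <= monom Y S.
Proof. move=> H; apply: prodR_ge0 => i _; exact: fpart_ge0. Qed.

Lemma monom0 Y : monom Y set0 = 1.
Proof. by rewrite /monom big_set0. Qed.

Lemma monomU1 Y e S : e \notin S -> monom Y (e |: S) = fpart (Y e) * monom Y S.
Proof. by move=> h; rewrite /monom big_setU1. Qed.

Lemma monomU Y F S : [disjoint F & S] -> monom Y (F :|: S) = monom Y F * monom Y S.
Proof.
move=> h; rewrite /monom -bigU //=; apply: eq_bigl => i; by rewrite !inE.
Qed.

Lemma subsum_ge1 Y A k : nonnegY Y -> 1 <= subsum Y A k.
Proof.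
move=> H; rewrite -(monom0 Y) /subsum; apply: single_le_sum.
  by rewrite sub0set cards0.
by move=> S _; apply: monom_ge0.
Qed.

Lemma top_reindex A F (n : nat) (g : {set E} -> R) : F \subset A -> (#|F| <= n)%nat ->
  \big[Rplus/0]_(S : {set E} | (S \subset A) && (#|S| <= n)%nat && (F \subset S)) g S =
  \big[Rplus/0]_(S : {set E} | (S \subset A :\: F) && (#|S| <= n - #|F|)%nat) g (F :|: S).
Proof.
move=> FA Fn.
rewrite (reindex_onto (fun S => F :|: S) (fun S => S :\: F)) /=; last first.
  move=> S /andP [_ FS]; apply/setP => x; rewrite !inE.
  by case: (boolP (x \in F)) => // xF; rewrite (subsetP FS).
apply: eq_bigl => S.
case: (boolP (S \subset A :\: F)) => HS /=.
  move: (HS); rewrite subsetD => /andP [SA dSF].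
  have -> : (F :|: S) :\: F = S.
    apply/setP => x; rewrite !inE.
    case xF: (x \in F); case xS: (x \in S) => //=.
    by move: dSF; rewrite disjoint_subset => /subsetP /(_ x); rewrite xS inE xF => /(_ isT).
  rewrite eqxx subsetUl subUset FA SA /= !andbT.
  have : (#|F :|: S| + #|F :&: S| = #|F| + #|S|)%nat by apply: cardsUI.
  have -> : F :&: S = set0 by apply/eqP; rewrite setI_eq0 disjoint_sym.
  rewrite cards0 addn0 => ->.
  apply/idP/idP; lia.
apply/negbTE; apply: contra HS => /andP [/andP [/andP [FSA _] _] /eqP <-].
exact: setSD.
Qed.

End Sets.
Section Split.
Variable E : finType.
Implicit Types (Y Z : E -> xR) (A F S : {set E}).

Definition Vs Y A (n : nat) := \big[Rplus/0]_(S : {set E} | (S \subset A) && (#|S| <= n)%nat)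
   (INR #|S| * monom Y S).

Lemma sum_in Y A e (m : nat) : e \in A ->
  \big[Rplus/0]_(S : {set E} | (S \subset A) && (#|S| <= m.+1)%nat && (e \in S)) monom Y S
  = fpart (Y e) * subsum Y (A :\ e) m.
Proof.
move=> eA.
rewrite (eq_bigl (fun S : {set E} => (S \subset A) && (#|S| <= m.+1)%nat && ([set e] \subset S)));
  last by move=> S; rewrite sub1set.
rewrite top_reindex ?sub1set ?cards1 // subn1 /= /subsum big_distrr /=.
apply: eq_bigr => S /andP [SA _]; apply: monomU1.
by move: SA; rewrite subsetD1 => /andP [].
Qed.

Lemma sum_out Y A e (n : nat) :
  \big[Rplus/0]_(S : {set E} | (S \subset A) && (#|S| <= n)%nat && ~~ (e \in S)) monom Y S
  = subsum Y (A :\ e) n.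
Proof.
rewrite /subsum; apply: eq_bigl => S; rewrite subsetD1.
by case: (S \subset A); case: (e \in S); case: (#|S| <= n)%nat.
Qed.

Lemma subsum_split Y A e (m : nat) : e \in A ->
  subsum Y A m.+1 = subsum Y (A :\ e) m.+1 + fpart (Y e) * subsum Y (A :\ e) m.
Proof.
move=> eA; rewrite {1}/subsum (bigID (fun S => e \in S)) /= sum_in // sum_out; lra.
Qed.

Lemma term_eq y a b : 0 <= y -> 0 <= a -> 0 < b ->
  term y (a / b) = y * a / (b + y * a).
Proof.
move=> y0 a0 b0; rewrite /term.
have h1 : 0 <= y * a by nra.
have h2 : 0 <= y * (a / b).
  apply: Rmult_le_pos => //; apply: Rmult_le_pos => //; apply: Rlt_le; exact: Rinv_0_lt_compat.
field; split; lra.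
Qed.

Lemma term_sum Y A (m : nat) : nonnegY Y ->
  \big[Rplus/0]_(e in A) term (fpart (Y e)) (subsum Y (A :\ e) m / subsum Y (A :\ e) m.+1)
  = Vs Y A m.+1 / subsum Y A m.+1.
Proof.
move=> HY.
have T1 : forall B k, 1 <= subsum Y B k by move=> B k; exact: subsum_ge1.
rewrite (eq_bigr (fun e => (\big[Rplus/0]_(S : {set E} | (S \subset A) && (#|S| <= m.+1)%nat && (e \in S)) monom Y S) * / subsum Y A m.+1)); last first.
  move=> e eA; rewrite term_eq; first 1 last.
  - exact: fpart_ge0.
  - by have := T1 (A :\ e) m; lra.
  - by have := T1 (A :\ e) m.+1; lra.
  by rewrite sum_in // (subsum_split Y m eA).
rewrite -big_distrl /= /Rdiv; congr (_ * _).
under eq_bigr do rewrite big_mkcondr.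
rewrite exchange_big /Vs /=; apply: eq_bigr => S /andP [SA _].
rewrite -big_mkcondr -sumR_const_in; apply: eq_bigl => e.
by case eS: (e \in S); rewrite ?andbF ?andbT // (subsetP SA).
Qed.

End Split.
Section DForm.
Variable E : finType.
Variable w : nat.
Implicit Types (Y Z : E -> xR) (A F S : {set E}).

Definition Finf Y := [set e | isInf (Y e)].

Lemma Eprime_fin Y e : ~~ isInf (Y e) -> Eprime e Y = Finf Y.
Proof.
move=> h; apply/setP => f; rewrite !inE.
by case: eqP => // ->; rewrite (negbTE h).
Qed.

Lemma setC_U1 F e : ~: (F :|: [set e]) = ~: F :\ e.
Proof. by apply/setP => x; rewrite !inE negb_or andbC. Qed.

Lemma D_lt Y : nonnegY Y -> (#|Finf Y| < w)%nat ->
  Dmap w Y = INR #|Finf Y| +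
     Vs Y (~: Finf Y) (w - #|Finf Y|) / subsum Y (~: Finf Y) (w - #|Finf Y|).
Proof.
move=> HY kw.
have [m hm] : exists m, (w - #|Finf Y| = m.+1)%nat by exists (w - #|Finf Y| - 1)%nat; lia.
rewrite hm -term_sum // /Dmap.
have -> : minn w #|[set e | isInf (Y e)]| = #|Finf Y| by rewrite /Finf in kw *; lia.
rewrite Rplus_comm; congr (_ + _).
rewrite [RHS]big_mkcond /=; apply: eq_bigr => e _.
rewrite !inE /isFin; case h: (isInf (Y e)) => //=.
rewrite /Rmap /= Eprime_fin ?h // kw setC_U1 hm subn1 /=.
done.
Qed.

Lemma D_ge Y : (w <= #|Finf Y|)%nat -> Dmap w Y = INR w.
Proof.
move=> kw; rewrite /Dmap.
have -> : minn w #|[set e | isInf (Y e)]| = w by rewrite /Finf in kw; lia.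
rewrite big1; first lra.
move=> e _; rewrite /isFin; case h: (isInf (Y e)) => //=.
rewrite /Rmap /= Eprime_fin ?h //.
have -> : (#|Finf Y| < w)%nat = false by lia.
rewrite /term; lra.
Qed.

Lemma Finf0 Y : (forall e, isFin (Y e)) -> Finf Y = set0.
Proof. move=> h; apply/setP => e; rewrite !inE; have := h e; rewrite /isFin; by case: isInf. Qed.

Lemma D_fin Z : (1 <= w)%nat -> nonnegY Z -> (forall e, isFin (Z e)) ->
  Dmap w Z = Vs Z setT w / subsum Z setT w.
Proof.
move=> w1 HZ hf; rewrite D_lt ?Finf0 ?cards0 //.
have -> : ~: set0 = [set: E] by apply/setP => x; rewrite !inE.
rewrite subn0 /=; lra.
Qed.

End DForm.
Lemma div_le a b c : 0 < b -> a <= c * b -> a / b <= c.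
Proof.
move=> b0 h; have hb : 0 < / b by apply: Rinv_0_lt_compat.
have -> : c = c * b * / b by field; lra.
apply: Rmult_le_compat_r; lra.
Qed.

Lemma div_ge0 a b : 0 < b -> 0 <= a -> 0 <= a / b.
Proof.
move=> b0 a0; apply: Rmult_le_pos => //; apply: Rlt_le; exact: Rinv_0_lt_compat.
Qed.

Section Part13.
Variable E : finType.
Variable w : nat.
Hypothesis hw : (1 <= w)%nat.
Implicit Types (Y Z : E -> xR) (A F S : {set E}).

Lemma Vs_ge0 Y A n : nonnegY Y -> 0 <= Vs Y A n.
Proof.
move=> HY; apply: sumR_ge0 => S _; apply: Rmult_le_pos; [exact: pos_INR | exact: monom_ge0].
Qed.

Lemma Vs_le Y A n : nonnegY Y -> Vs Y A n <= INR #|A| * subsum Y A n.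
Proof.
move=> HY; rewrite /subsum big_distrr /=; apply: sumR_le => S /andP [SA _].
apply: Rmult_le_compat_r; first exact: monom_ge0.
apply: le_INR; apply/leP; exact: subset_leq_card.
Qed.

Lemma part1 Y : nonnegY Y -> 0 <= Dmap w Y <= INR #|E|.
Proof.
move=> HY.
have hN : (#|Finf Y| + #|~: Finf Y| = #|E|)%nat by apply: cardsC.
case: (ltnP #|Finf Y| w) => kw.
  rewrite D_lt //.
  have U1 := subsum_ge1 (~: Finf Y) (w - #|Finf Y|) HY.
  have h0 := div_ge0 (ltac:(lra) : 0 < subsum Y (~: Finf Y) (w - #|Finf Y|)) (Vs_ge0 (~: Finf Y) (w - #|Finf Y|) HY).
  have h1 := div_le (ltac:(lra) : 0 < subsum Y (~: Finf Y) (w - #|Finf Y|)) (Vs_le (~: Finf Y) (w - #|Finf Y|) HY).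
  have h2 := pos_INR #|Finf Y|.
  rewrite -hN plus_INR; lra.
rewrite D_ge //; split; first exact: pos_INR.
apply: le_INR; apply/leP; rewrite -hN; lia.
Qed.

Lemma part3 Y : nonnegY Y -> (forall e, isFin (Y e)) ->
  Dmap w Y = \big[Rplus/0]_(e : E) term (fpart (Y e)) (Rmap_fin w e Y).
Proof.
move=> HY hf; rewrite /Dmap.
have -> : [set e | isInf (Y e)] = set0 by exact: Finf0.
rewrite cards0 minn0 /= Rplus_0_r; apply: eq_bigr => e _.
rewrite hf; congr term.
rewrite /Rmap /= Eprime_fin; last by have := hf e.
rewrite Finf0 // cards0 hw set0U subn0 //.
Qed.

End Part13.
Lemma prod_bound (I : eqType) (r : seq I) (b : I -> R) B :
  (forall i, i \in r -> 0 <= b i <= B) ->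
  0 <= \big[Rmult/1]_(i <- r) b i <= B ^ size r.
Proof.
elim: r => [|x r IH] H; first by rewrite big_nil /=; lra.
rewrite big_cons /=.
have [h1 h2] := H x (mem_head _ _).
have [h3 h4] : 0 <= \big[Rmult/1]_(i <- r) b i <= B ^ size r.
  by apply: IH => i ir; apply: H; rewrite inE ir orbT.
split; first nra.
apply: Rmult_le_compat; lra.
Qed.

Lemma prod_diff (I : eqType) (r : seq I) (a b : I -> R) B d :
  1 <= B -> 0 <= d ->
  (forall i, i \in r -> 0 <= a i <= B /\ 0 <= b i <= B /\ Rabs (a i - b i) <= d) ->
  Rabs (\big[Rmult/1]_(i <- r) a i - \big[Rmult/1]_(i <- r) b i)
    <= INR (size r) * B ^ size r * d.
Proof.
move=> B1 d0; elim: r => [|x r IH] H.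
  rewrite !big_nil /= Rminus_diag Rabs_R0; lra.
rewrite !big_cons.
have [[a1 a2] [[b1 b2] ab]] := H x (mem_head _ _).
have Hr : forall i, i \in r -> 0 <= a i <= B /\ 0 <= b i <= B /\ Rabs (a i - b i) <= d.
  by move=> i ir; apply: H; rewrite inE ir orbT.
have IH' := IH Hr.
have [pb1 pb2] := prod_bound (b := b) (B := B) (r := r) (fun i ir => proj1 (proj2 (Hr i ir))).
set Pa := \big[Rmult/1]_(i <- r) a i in IH' *.
set Pb := \big[Rmult/1]_(i <- r) b i in IH' pb1 pb2 *.
have -> : a x * Pa - b x * Pb = a x * (Pa - Pb) + (a x - b x) * Pb by ring.
apply: Rle_trans (Rabs_triang _ _) _.
rewrite !Rabs_mult (Rabs_pos_eq (a x)) // (Rabs_pos_eq Pb) //.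
have X0 : 0 <= B ^ size r by apply: pow_le; lra.
have s0 := pos_INR (size r).
have e1 : a x * Rabs (Pa - Pb) <= B * (INR (size r) * B ^ size r * d).
  apply: Rmult_le_compat => //; first exact: Rabs_pos.
have e2 : Rabs (a x - b x) * Pb <= d * B ^ size r.
  apply: Rmult_le_compat => //; exact: Rabs_pos.
rewrite (_ : size (x :: r) = (size r).+1) // S_INR -tech_pow_Rmult.
have : 0 <= B ^ size r * d * (B - 1).
  apply: Rmult_le_pos; [exact: Rmult_le_pos | lra].
set X := B ^ size r in X0 e1 e2 *.
set s := INR (size r) in s0 e1 *.
move=> hh; have : (s + 1) * (B * X) * d = B * (s * X * d) + d * X + X * d * (B - 1) by ring.
lra.
Qed.

Section Cont.
Variable E : finType.
Variable w : nat.
Hypothesis hw : (1 <= w)%nat.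
Implicit Types (Y Z : E -> xR) (A F S : {set E}).

Definition Bnd Y := 1 + \big[Rplus/0]_(e : E) fpart (Y e).

Lemma Bnd_ge Y g : nonnegY Y -> fpart (Y g) <= Bnd Y - 1 /\ 1 <= Bnd Y.
Proof.
move=> HY; rewrite /Bnd.
have h : fpart (Y g) <= \big[Rplus/0]_(e : E) fpart (Y e).
  by apply: (single_le_sum (F := fun e => fpart (Y e))) => // i _; exact: fpart_ge0.
have h0 := fpart_ge0 (HY g); lra.
Qed.

Lemma near_inf Y Z d M f : f \in Finf Y -> (forall e, isFin (Z e)) ->
  near_xR d M (Y f) (Z f) -> M < fpart (Z f).
Proof.
rewrite inE; case: (Y f) => // _ hf; have := hf f; rewrite /isFin.
by case: (Z f).
Qed.

Lemma near_fin Y Z d M g : nonnegY Y -> g \notin Finf Y -> (forall e, isFin (Z e)) -> d <= 1 ->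
  near_xR d M (Y g) (Z g) ->
  Rabs (fpart (Z g) - fpart (Y g)) < d /\ fpart (Z g) <= Bnd Y /\ fpart (Y g) <= Bnd Y.
Proof.
move=> HY; rewrite inE; have [h1 h2] := Bnd_ge g HY.
move: h1; case: (Y g) => // y /= h1 _ hf d1; have := hf g; rewrite /isFin.
case: (Z g) => // z /= _ hn; split => //.
have [ha hb] := Rabs_def2 _ _ hn; lra.
Qed.

End Cont.
Section Cont2.
Variable E : finType.
Variable w : nat.
Hypothesis hw : (1 <= w)%nat.
Implicit Types (Y Z : E -> xR) (A F S : {set E}).

Definition nearall Y Z d M := forall e, near_xR d M (Y e) (Z e).
Definition allfin Z := forall e : E, isFin (Z e).

Lemma Bnd_ge1 Y : nonnegY Y -> 1 <= Bnd Y.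
Proof.
move=> HY; rewrite /Bnd.
have : 0 <= \big[Rplus/0]_(e : E) fpart (Y e) by apply: sumR_ge0 => i _; exact: fpart_ge0.
lra.
Qed.

Lemma monom_diff Y Z d M S : nonnegY Y -> nonnegY Z -> allfin Z -> d <= 1 -> 0 <= d ->
  nearall Y Z d M -> S \subset ~: Finf Y ->
  Rabs (monom Z S - monom Y S) <= INR #|E| * Bnd Y ^ #|E| * d.
Proof.
move=> HY HZ hf d1 d0 hn SF.
have B1 := Bnd_ge1 HY.
rewrite /monom -!big_enum /=.
apply: Rle_trans.
  apply: (prod_diff (B := Bnd Y) (d := d)) => // i; rewrite mem_enum => iS.
  have iF : i \notin Finf Y by move: (subsetP SF i iS); rewrite inE.
  have [h1 [h2 h3]] := near_fin HY iF hf d1 (hn i).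
  have := fpart_ge0 (HY i); have := fpart_ge0 (HZ i); split; [lra | split; lra].
rewrite -cardE; apply: Rmult_le_compat_r => //.
have hc : (#|S| <= #|E|)%coq_nat by apply/leP; exact: max_card.
apply: Rmult_le_compat.
- exact: pos_INR.
- apply: pow_le; lra.
- exact: le_INR.
- exact: Rle_pow.
Qed.

Lemma low_bound Y Z d M S f : nonnegY Y -> nonnegY Z -> allfin Z -> d <= 1 -> 0 < M ->
  nearall Y Z d M ->
  (#|S| <= w)%nat -> f \in Finf Y -> f \notin S ->
  ((#|S| < w)%nat \/ exists2 g, g \in S & g \notin Finf Y) ->
  M * monom Z S <= Bnd Y * subsum Z setT w.
Proof.
move=> HY HZ hf d1 M0 hn Sw fF fS hor.
have B1 := Bnd_ge1 HY.
have T0 : 0 <= subsum Z setT w by apply: sumR_ge0 => S' _; exact: monom_ge0.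
have Zf := near_inf fF hf (hn f).
have single : forall S', (#|S'| <= w)%nat -> monom Z S' <= subsum Z setT w.
  move=> S' hS'; apply: (single_le_sum (F := monom Z)); first by rewrite subsetT.
  by move=> i _; exact: monom_ge0.
have m0 := monom_ge0 S HZ.
case: hor => [Sw' | [g gS gF]].
  have h1 := single (f |: S); rewrite monomU1 // in h1.
  have : M * monom Z S <= fpart (Z f) * monom Z S by apply: Rmult_le_compat_r; lra.
  have : fpart (Z f) * monom Z S <= subsum Z setT w.
    apply: h1; rewrite cardsU1 (negbTE fS) /=; lia.
  nra.
have [_ [Zg _]] := near_fin HY gF hf d1 (hn g).
have Zg0 := fpart_ge0 (HZ g).
have gS' : g \notin S :\ g by rewrite setD11.
have fS' : f \notin S :\ g by rewrite inE (negbTE fS) andbF.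
have eS : monom Z S = fpart (Z g) * monom Z (S :\ g) by rewrite -monomU1 // setD1K.
have m1 := monom_ge0 (S :\ g) HZ.
have h1 := single (f |: (S :\ g)); rewrite monomU1 // in h1.
have h2 : fpart (Z f) * monom Z (S :\ g) <= subsum Z setT w.
  apply: h1; rewrite cardsU1 fS' /=; move: Sw; rewrite (cardsD1 g S) gS; lia.
rewrite eS.
have e1 : M * (fpart (Z g) * monom Z (S :\ g)) <= fpart (Z g) * (fpart (Z f) * monom Z (S :\ g)).
  have : 0 <= fpart (Z g) * monom Z (S :\ g) by nra.
  nra.
apply: Rle_trans e1 _; apply: Rmult_le_compat => //; nra.
Qed.

End Cont2.
Lemma exM X eps : 0 <= X -> 0 < eps -> exists M, 1 <= M /\ X * / M < eps.
Proof.
move=> X0 e0; exists (X / eps + 1).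
have h : 0 <= X / eps by apply: div_ge0.
split; first lra.
apply: (Rmult_lt_reg_r (X / eps + 1)); first lra.
have -> : X * / (X / eps + 1) * (X / eps + 1) = X by field; lra.
have -> : eps * (X / eps + 1) = X + eps by field; lra.
lra.
Qed.

Section Cont3.
Variable E : finType.
Variable w : nat.
Hypothesis hw : (1 <= w)%nat.
Implicit Types (Y Z : E -> xR) (A F S : {set E}).

Lemma cont_ge Y eps : nonnegY Y -> (w <= #|Finf Y|)%nat -> 0 < eps ->
  exists d, 0 < d /\ exists M, forall Z, nonnegY Z -> allfin Z -> nearall Y Z d M ->
  Rabs (Dmap w Z - Dmap w Y) < eps.
Proof.
move=> HY kw e0.
have B1 := Bnd_ge1 HY.
have C0 := pos_INR #|{set E}|.
have w0 := pos_INR w.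
have [M [M1 hM]] := exM (X := INR #|{set E}| * INR w * Bnd Y) (eps := eps) ltac:(apply: Rmult_le_pos; nra) e0.
exists 1; split; first lra; exists M => Z HZ hf hn.
rewrite (D_ge (Y := Y)) // (D_fin (Z := Z)) //.
have T1 := subsum_ge1 setT w HZ.
set T := subsum Z setT w in T1 *.
have iM : 0 < / M by apply: Rinv_0_lt_compat; lra.
have q_eq : INR w * T - Vs Z setT w =
   \big[Rplus/0]_(S : {set E} | (S \subset setT) && (#|S| <= w)%nat) ((INR w - INR #|S|) * monom Z S).
  rewrite /T /subsum /Vs big_distrr /= -sumRB; apply: eq_bigr => S _; ring.
have q0 : 0 <= INR w * T - Vs Z setT w.
  rewrite q_eq; apply: sumR_ge0 => S /andP [_ Sw]; apply: Rmult_le_pos; last exact: monom_ge0.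
  have : INR #|S| <= INR w by apply: le_INR; apply/leP.
  lra.
have q1 : INR w * T - Vs Z setT w <= INR #|{set E}| * (INR w * (Bnd Y * T * / M)).
  rewrite q_eq; apply: sum_le_card.
    apply: Rmult_le_pos => //; apply: Rmult_le_pos; last lra; nra.
  move=> S /andP [_ Sw].
  have m0 := monom_ge0 S HZ.
  case: (ltnP #|S| w) => Sw'; last first.
    have -> : #|S| = w by apply/eqP; rewrite eqn_leq Sw Sw'.
    rewrite Rminus_diag Rmult_0_l; apply: Rmult_le_pos => //; apply: Rmult_le_pos; last lra; nra.
  have [f fF fS] : exists2 f, f \in Finf Y & f \notin S.
    apply/subsetPn; apply/negP => FS; have := subset_leq_card FS; lia.
  have hl := low_bound (d := 1) (M := M) (Z := Z) (Y := Y) (S := S) (f := f) hw HY HZ hf ltac:(lra) ltac:(lra) hn Sw fF fS (or_introl Sw').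
  have hm : monom Z S <= Bnd Y * T * / M.
    apply: (Rmult_le_reg_l M); first lra.
    have -> : M * (Bnd Y * T * / M) = Bnd Y * T by field; lra.
    exact: hl.
  have : 0 <= INR #|S| := pos_INR _.
  have : INR w - INR #|S| <= INR w by have := pos_INR #|S|; lra.
  have : INR #|S| <= INR w by apply: le_INR; apply/leP.
  move=> h3 h1 h2; apply: Rmult_le_compat => //; lra.
have -> : Vs Z setT w / T - INR w = - ((INR w * T - Vs Z setT w) * / T) by field; lra.
rewrite Rabs_Ropp Rabs_pos_eq; last first.
  apply: Rmult_le_pos => //; apply: Rlt_le; apply: Rinv_0_lt_compat; lra.
have iT : 0 < / T by apply: Rinv_0_lt_compat; lra.
apply: (Rle_lt_trans _ (INR #|{set E}| * (INR w * (Bnd Y * T * / M)) * / T)).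
  by apply: Rmult_le_compat_r; lra.
have -> : INR #|{set E}| * (INR w * (Bnd Y * T * / M)) * / T =
          INR #|{set E}| * INR w * Bnd Y * / M by field; lra.
exact: hM.
Qed.

End Cont3.
Section Dec.
Variable E : finType.
Variable w : nat.
Implicit Types (Y Z : E -> xR) (A F S : {set E}).

Definition Lsum Z F := \big[Rplus/0]_(S : {set E} | (S \subset setT) && (#|S| <= w)%nat && ~~ (F \subset S)) monom Z S.
Definition L1sum Z F := \big[Rplus/0]_(S : {set E} | (S \subset setT) && (#|S| <= w)%nat && ~~ (F \subset S)) (INR #|S| * monom Z S).

Lemma disj_of S F : S \subset ~: F -> [disjoint F & S].
Proof. by rewrite disjoint_sym disjoints_subset. Qed.

Lemma card_of S F : S \subset ~: F -> #|F :|: S| = (#|F| + #|S|)%nat.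
Proof.
move=> h; have := cardsUI F S.
have -> : F :&: S = set0 by apply/eqP; rewrite setI_eq0; exact: disj_of.
by rewrite cards0 addn0.
Qed.

Lemma T_dec Z F : (#|F| <= w)%nat ->
  subsum Z setT w = monom Z F * subsum Z (~: F) (w - #|F|) + Lsum Z F.
Proof.
move=> Fw; rewrite /subsum (bigID (fun S => F \subset S)) /= top_reindex ?subsetT // setTD.
congr (_ + _); rewrite big_distrr /=; apply: eq_bigr => S /andP [SF _].
by rewrite monomU // disj_of.
Qed.

Lemma V_dec Z F : (#|F| <= w)%nat ->
  Vs Z setT w = monom Z F * (INR #|F| * subsum Z (~: F) (w - #|F|) + Vs Z (~: F) (w - #|F|)) + L1sum Z F.
Proof.
move=> Fw; rewrite /Vs (bigID (fun S => F \subset S)) /= top_reindex ?subsetT // setTD.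
congr (_ + _); rewrite /subsum big_distrr /= -big_split big_distrr /=.
apply: eq_bigr => S /andP [SF _].
rewrite monomU ?disj_of // card_of // plus_INR; ring.
Qed.

End Dec.
Section Cont4.
Variable E : finType.
Variable w : nat.
Hypothesis hw : (1 <= w)%nat.
Implicit Types (Y Z : E -> xR) (A F S : {set E}).

Lemma cont_lt Y eps : nonnegY Y -> (#|Finf Y| < w)%nat -> 0 < eps ->
  exists d, 0 < d /\ exists M, forall Z, nonnegY Z -> allfin Z -> nearall Y Z d M ->
  Rabs (Dmap w Z - Dmap w Y) < eps.
Proof.
move=> HY kw e0.
set F := Finf Y in kw *; set k := #|F| in kw *.
set n := (w - k)%nat.
have hkn : INR k + INR n = INR w by rewrite -plus_INR /n; congr INR; lia.
set UY := subsum Y (~: F) n; set VY := Vs Y (~: F) n.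
have UY1 : 1 <= UY := subsum_ge1 _ _ HY.
have VY0 : 0 <= VY := Vs_ge0 _ _ HY.
have B1 := Bnd_ge1 HY.
set B := Bnd Y in B1 *.
set N := INR #|E|; set C := INR #|{set E}|.
have N0 : 0 <= N := pos_INR _.
have C0 : 0 <= C := pos_INR _.
set K := N * B ^ #|E|.
have K0 : 0 <= K by apply: Rmult_le_pos => //; apply: pow_le; lra.
set Q := C * K * (N * UY + VY) + 1.
have Q1 : 1 <= Q.
  have : 0 <= C * K * (N * UY + VY).
    apply: Rmult_le_pos; first exact: Rmult_le_pos.
    have : 0 <= N * UY by apply: Rmult_le_pos; lra.
    lra.
  rewrite /Q; lra.
set d := Rmin 1 (eps / 2 / Q).
have d0 : 0 < d.
  apply: Rmin_pos; first lra.
  apply: Rmult_lt_0_compat; first lra; apply: Rinv_0_lt_compat; lra.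
have d1 : d <= 1 := Rmin_l _ _.
have dQ : Q * d <= eps / 2.
  have : d <= eps / 2 / Q := Rmin_r _ _.
  move=> h; apply: (Rle_trans _ (Q * (eps / 2 / Q))); first by apply: Rmult_le_compat_l; lra.
  right; field; lra.
have w0 := pos_INR w.
have [M [M1 hM]] := exM (X := INR w * C * B) (eps := eps / 2)
   ltac:(apply: Rmult_le_pos; [apply: Rmult_le_pos => // | lra]) ltac:(lra).
exists d; split => //; exists M => Z HZ hf hn.
rewrite (D_lt (Y := Y)) // (D_fin (Z := Z)) // -/F -/k -/n -/UY -/VY.
have T1 := subsum_ge1 setT w HZ.
set T := subsum Z setT w in T1 *.
set U := subsum Z (~: F) n; set V := Vs Z (~: F) n.
have U1 : 1 <= U := subsum_ge1 _ _ HZ.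
have V0 : 0 <= V := Vs_ge0 _ _ HZ.
have P0 : 0 <= monom Z F := monom_ge0 _ HZ.
set P := monom Z F in P0.
have kw' : (k <= w)%nat by lia.
have Td : T = P * U + Lsum w Z F by rewrite /T (T_dec Z kw').
have Vd : Vs Z setT w = P * (INR k * U + V) + L1sum w Z F by rewrite (V_dec Z kw').
have L0 : 0 <= Lsum w Z F by apply: sumR_ge0 => S _; exact: monom_ge0.
have L10 : 0 <= L1sum w Z F.
  apply: sumR_ge0 => S _; apply: Rmult_le_pos; [exact: pos_INR | exact: monom_ge0].
have L1L : L1sum w Z F <= INR w * Lsum w Z F.
  rewrite /L1sum /Lsum big_distrr /=; apply: sumR_le => S /andP [/andP [_ Sw] _].
  apply: Rmult_le_compat_r; first exact: monom_ge0.
  by apply: le_INR; apply/leP.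
have iM : 0 < / M by apply: Rinv_0_lt_compat; lra.
have LT : Lsum w Z F <= C * (B * T * / M).
  apply: sum_le_card.
    apply: Rmult_le_pos; last lra; apply: Rmult_le_pos; lra.
  move=> S /andP [/andP [_ Sw] FS].
  have [f fF fS] := subsetPn FS.
  have hor : (#|S| < w)%nat \/ exists2 g, g \in S & g \notin Finf Y.
    case: (ltnP #|S| w) => Sw'; [by left | right].
    apply/subsetPn; apply/negP => SF; have := subset_leq_card SF; rewrite -/k; lia.
  have hl := low_bound (d := d) (M := M) (Z := Z) (Y := Y) (S := S) (f := f) hw HY HZ hf d1
     ltac:(lra) hn Sw fF fS hor.
  apply: (Rmult_le_reg_l M); first lra.
  have -> : M * (B * T * / M) = B * T by field; lra.
  exact: hl.
have Vn : V <= INR n * U.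
  rewrite /V /U /Vs /subsum big_distrr /=; apply: sumR_le => S /andP [_ Sn].
  apply: Rmult_le_compat_r; first exact: monom_ge0.
  by apply: le_INR; apply/leP.
set c := INR k + V / U.
have c0 : 0 <= c by have := div_ge0 (ltac:(lra) : 0 < U) V0; have := pos_INR k; rewrite /c; lra.
have cw : c <= INR w by have := div_le (ltac:(lra) : 0 < U) Vn; rewrite /c; lra.
have e1 : Vs Z setT w - c * T = L1sum w Z F - c * Lsum w Z F.
  rewrite Vd Td /c; field; lra.
have cL : c * Lsum w Z F <= INR w * Lsum w Z F by apply: Rmult_le_compat_r.
have cL0 : 0 <= c * Lsum w Z F by apply: Rmult_le_pos.
have iT : 0 < / T by apply: Rinv_0_lt_compat; lra.
have part1 : Rabs (Vs Z setT w / T - c) <= INR w * C * B * / M.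
  have -> : Vs Z setT w / T - c = (Vs Z setT w - c * T) * / T by field; lra.
  rewrite e1 Rabs_mult (Rabs_pos_eq (/ T)); last lra.
  apply: (Rle_trans _ (INR w * Lsum w Z F * / T)).
    apply: Rmult_le_compat_r; first lra.
    apply: Rabs_le; lra.
  apply: (Rle_trans _ (INR w * (C * (B * T * / M)) * / T)).
    apply: Rmult_le_compat_r; first lra.
    by apply: Rmult_le_compat_l.
  right; field; lra.
have md : forall S, S \subset ~: F -> Rabs (monom Z S - monom Y S) <= K * d.
  move=> S SF; exact: (monom_diff (M := M) HY HZ hf d1 (Rlt_le _ _ d0) hn SF).
have hU : Rabs (U - UY) <= C * (K * d).
  rewrite /U /UY /subsum -sumRB; apply: Rle_trans (sumR_abs _ _ _) _.
  apply: sum_le_card; first by apply: Rmult_le_pos => //; lra.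
  by move=> S /andP [SF _]; apply: md.
have hV : Rabs (V - VY) <= C * (N * (K * d)).
  rewrite /V /VY /Vs -sumRB; apply: Rle_trans (sumR_abs _ _ _) _.
  apply: sum_le_card.
    apply: Rmult_le_pos => //; apply: Rmult_le_pos => //; lra.
  move=> S /andP [SF _].
  rewrite -Rmult_minus_distr_l Rabs_mult Rabs_pos_eq; last exact: pos_INR.
  apply: Rmult_le_compat => //; [exact: pos_INR | exact: Rabs_pos | | exact: md].
  by apply: le_INR; apply/leP; exact: max_card.
have part2 : Rabs (V / U - VY / UY) < eps / 2.
  have -> : V / U - VY / UY = ((V - VY) * UY - VY * (U - UY)) * / (U * UY) by field; lra.
  have iUU : 0 < / (U * UY) <= 1.
    split; first by apply: Rinv_0_lt_compat; nra.
    rewrite -Rinv_1; apply: Rinv_le_contravar; nra.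
  rewrite Rabs_mult (Rabs_pos_eq (/ (U * UY))); last lra.
  have hA : Rabs ((V - VY) * UY - VY * (U - UY)) <= C * K * d * (N * UY + VY).
    apply: Rle_trans (Rabs_triang _ _) _.
    rewrite Rabs_Ropp !Rabs_mult (Rabs_pos_eq UY) ?(Rabs_pos_eq VY); try lra.
    have h1 : Rabs (V - VY) * UY <= C * (N * (K * d)) * UY by apply: Rmult_le_compat_r; lra.
    have h2 : VY * Rabs (U - UY) <= VY * (C * (K * d)) by apply: Rmult_le_compat_l.
    have -> : C * K * d * (N * UY + VY) = C * (N * (K * d)) * UY + VY * (C * (K * d)) by ring.
    lra.
  have hA0 : 0 <= Rabs ((V - VY) * UY - VY * (U - UY)) := Rabs_pos _.
  have : Rabs ((V - VY) * UY - VY * (U - UY)) * / (U * UY) <= Rabs ((V - VY) * UY - VY * (U - UY)).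
    have := Rmult_le_compat_l _ _ _ hA0 (proj2 iUU); lra.
  have : C * K * d * (N * UY + VY) < Q * d.
    rewrite /Q; have -> : (C * K * (N * UY + VY) + 1) * d = C * K * d * (N * UY + VY) + d by ring.
    lra.
  lra.
have -> : Vs Z setT w / T - (INR k + VY / UY) = (Vs Z setT w / T - c) + (V / U - VY / UY) by rewrite /c; ring.
apply: Rle_lt_trans (Rabs_triang _ _) _; lra.
Qed.

End Cont4.
Lemma rcont (E : finType) (w : nat) (hw : (1 <= w)%nat) (Y : E -> xR) eps :
  nonnegY Y -> 0 < eps ->
  exists d, 0 < d /\ exists M, forall Z, nonnegY Z -> allfin Z -> nearall Y Z d M ->
  Rabs (Dmap w Z - Dmap w Y) < eps.
Proof.
move=> HY e0; case: (ltnP #|Finf Y| w) => kw.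
  exact: cont_lt.
exact: cont_ge.
Qed.

Lemma fullcont (E : finType) (w : nat) (hw : (1 <= w)%nat) :
  continuous_on_xR (Dmap (E := E) w).
Proof.
move=> Y HY eps e0.
have e2 : 0 < eps / 2 by lra.
have [d [d0 [M hM]]] := rcont hw HY e2.
exists d; split => //; exists M => Z HZ hn.
have [d' [d0' [M' hM']]] := rcont hw HZ e2.
set big := Rmax (Rmax M M') 0 + 1.
have hb1 : M < big by have := Rmax_l M M'; have := Rmax_l (Rmax M M') 0; rewrite /big; lra.
have hb2 : M' < big by have := Rmax_r M M'; have := Rmax_l (Rmax M M') 0; rewrite /big; lra.
have hb3 : 0 <= big by have := Rmax_r (Rmax M M') 0; rewrite /big; lra.
pose Z' := fun e => if Z e is Fin z then Fin z else Fin big.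
have HZ' : nonnegY Z' by move=> e; rewrite /Z'; have := HZ e; case: (Z e).
have hf' : allfin Z' by move=> e; rewrite /Z'; case: (Z e).
have n1 : nearall Y Z' d M.
  move=> e; have := hn e; rewrite /Z'; case: (Y e) => [y|]; case: (Z e) => //=.
have n2 : nearall Z Z' d' M'.
  move=> e; rewrite /Z'; case: (Z e) => [z|] //=.
  by rewrite Rminus_diag Rabs_R0.
have h1 := hM Z' HZ' hf' n1.
have h2 := hM' Z' HZ' hf' n2.
have -> : Dmap w Z - Dmap w Y = (Dmap w Z' - Dmap w Y) - (Dmap w Z' - Dmap w Z) by ring.
apply: Rle_lt_trans (Rabs_triang _ _) _; rewrite Rabs_Ropp; lra.
Qed.

Theorem mainTheorem5 (E : finType) (w : nat) (hw : (1 <= w)%N) :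
  (forall Y : E -> xR, (forall e, nonneg_x (Y e)) ->
     (0 <= Dmap w Y <= INR #|E|)%R)
  /\ continuous_on_xR (Dmap (E := E) w)
  /\ (forall Y : E -> xR, (forall e, nonneg_x (Y e)) -> (forall e, isFin (Y e)) ->
       Dmap w Y = \big[Rplus/0%R]_(e : E) term (fpart (Y e)) (Rmap_fin w e Y)).
Proof.
split; first by move=> Y HY; exact: part1.
split; first exact: fullcont.
by move=> Y HY hf; exact: part3.
Qed.
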